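(* For any $n\ge1$, the $\mathbb{S}_n$-module $\mathcal{C}om\mathcal{T}rias(n)$ is isomorphic to the free $k$-module on $\mathcal{C}om\mathcal{T}rias_n=\{e^n_J\mid J\subset[n],\ J\ne\emptyset\}$, where the action of $\mathbb{S}_n$ is induced by the natural action on the subsets $J$ of $[n]$, and the composition of the operad $\mathcal{C}om\mathcal{T}rias$ is given by $$e^k_J\otimes e^{i_1}_{J_1}\otimes\cdots\otimes e^{i_k}_{J_k}\mapsto e^n_{\bar J},\qquad n=i_1+\cdots+i_k,\quad \bar J=\bigcup_{j\in J}\big((i_1+\cdots+i_{j-1})+J_j\big),$$ where $(i_1+\cdots+i_{j-1})+J_j=\{i_1+\cdots+i_{j-1}+a\mid a\in J_j\}$.
   Context: $k$ denotes $\mathbb{Z}$, $\mathbb{Q}$, $\mathbb{F}_p$ or a field of characteristic $0$. A commutative trialgebra is a $k$-module $A$ with two binary operations $*$ and $\bullet$ such that $(x*y)*z=x*(y*z)=x*(z*y)$; $x\bullet y=y\bullet x$ and $(x\bullet y)\bullet z=x\bullet(y\bullet z)$; and $x*(y\bullet z)=x*(y*z)$, $(x\bullet y)*z=x\bullet(y*z)$. $\mathcal{C}om\mathcal{T}rias$ is the (quadratic) operad encoding commutative trialgebras, and $\mathcal{C}om\mathcal{T}rias(n)$ its arity-$n$ component. *)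

(* Defs.v *)
From HB Require Import structures.
From mathcomp Require Import all_boot all_order all_fingroup all_algebra.
Set Implicit Arguments. Unset Strict Implicit. Unset Printing Implicit Defensive.
Import Order.TTheory GRing.Theory Num.Theory.
Local Open Scope ring_scope.

(* Terms of the free (symmetric) operad on two binary generators:      *)
(*   Star a b  = a * b   (no symmetry; both orderings are separate)    *)
(* Variables are indexed by nat, 0-based: x_0, ..., x_{n-1}.          *)
Inductive tm : Type :=
| Var of nat
| Star of tm & tm
| Bul of tm & tm.

Definition tm_eq_dec (a b : tm) : {a = b} + {a <> b}.
Proof. decide equality; exact: (fun a b : nat => decP (a =P b)). Defined.

Definition tm_eqb (a b : tm) : bool := if tm_eq_dec a b then true else false.
Lemma tm_eqP : Equality.axiom tm_eqb.
Proof. by move=> a b; rewrite /tm_eqb; case: tm_eq_dec => h; constructor. Qed.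
HB.instance Definition _ := hasDecEq.Build tm tm_eqP.

Fixpoint leaves (t : tm) : seq nat :=
  match t with
  | Var i => [:: i]
  | Star a b => leaves a ++ leaves b
  | Bul a b => leaves a ++ leaves b
  end.

Definition multilinear (n : nat) (t : tm) : bool := perm_eq (leaves t) (iota 0 n).

Fixpoint subst (s : nat -> tm) (t : tm) : tm :=
  match t with
  | Var i => s i
  | Star a b => Star (subst s a) (subst s b)
  | Bul a b => Bul (subst s a) (subst s b)
  end.

Definition shift (o : nat) (t : tm) : tm := subst (fun i => Var (o + i)) t.

(* One-step rewriting by an instance of a defining relation of ComTrias,
   in an arbitrary context.  The operadic ideal in arity n is the k-span of
   the differences  s - s'  with  rstep s s'  (s multilinear in n vars). *)
Inductive rstep : tm -> tm -> Prop :=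
| rs_assoc x y z : rstep (Star (Star x y) z) (Star x (Star y z))
| rs_perm x y z : rstep (Star x (Star y z)) (Star x (Star z y))
| rs_comm x y : rstep (Bul x y) (Bul y x)
| rs_bassoc x y z : rstep (Bul (Bul x y) z) (Bul x (Bul y z))
| rs_mix1 x y z : rstep (Star x (Bul y z)) (Star x (Star y z))
| rs_mix2 x y z : rstep (Star (Bul x y) z) (Bul x (Star y z))
| rs_Sl a a' b : rstep a a' -> rstep (Star a b) (Star a' b)
| rs_Sr a b b' : rstep b b' -> rstep (Star a b) (Star a b')
| rs_Bl a a' b : rstep a a' -> rstep (Bul a b) (Bul a' b)
| rs_Br a b b' : rstep b b' -> rstep (Bul a b) (Bul a b').

(* free k-module on ComTrias_n = { e^n_J | J subset of [n], J nonempty } *)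
Notation nes n := {J : {set 'I_n} | J != set0}.
Notation V k n := {ffun nes n -> k}.

Section Lin.
Variable k : comNzRingType.

Definition lc := seq (k * tm).
Definition coef (c : lc) (t : tm) : k := \sum_(p <- c | p.2 == t) p.1.
Definition lc_multilinear (n : nat) (c : lc) : bool :=
  all (fun p => multilinear n p.2) c.

Definition in_rel (n : nat) (c : lc) : Prop :=
  exists ds : seq (k * (tm * tm)),
    (forall d, d \in ds -> rstep d.2.1 d.2.2 /\ multilinear n d.2.1) /\
    forall t, coef c t = \sum_(d <- ds) d.1 * ((d.2.1 == t)%:R - (d.2.2 == t)%:R).

Definition linext n (phi : tm -> V k n) (c : lc) : V k n :=
  [ffun J => \sum_(p <- c) p.1 * phi p.2 J].

(* S_n action on terms: relabel x_i |-> x_{s i} *)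
Definition relabel n (s : 'S_n) (t : tm) : tm :=
  subst (fun i => Var (odflt i (omap (fun o : 'I_n => val (s o)) (insub i)))) t.

(* S_n action on V k n induced by s . e_J = e_{s(J)} *)
Definition actV n (s : 'S_n) (v : V k n) : V k n :=
  [ffun J' : nes n => \sum_(J : nes n) (if s @: val J == val J' then v J else 0)].

Definition arity m (ar : 'I_m -> nat) : nat := \sum_(j < m) ar j.
Definition off m (ar : 'I_m -> nat) (j : 'I_m) : nat := \sum_(l < m | (l < j)%N) ar l.

Definition compose m (ar : 'I_m -> nat) (t : tm) (ts : 'I_m -> tm) : tm :=
  subst (fun j => match insub j : option 'I_m with
                  | Some o => shift (off ar o) (ts o)
                  | None => Var j end) t.

Definition Jbar m (ar : 'I_m -> nat) (J : nes m)
    (F : {dffun forall j : 'I_m, nes (ar j)}) : {set 'I_(arity ar)} :=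
  [set x : 'I_(arity ar) | [exists j : 'I_m, (j \in val J) &&
      [exists a : 'I_(ar j), (a \in val (F j)) && (val x == off ar j + a)]]].

(* multilinear extension of  e^m_J (x) e_{J_1} (x) ... (x) e_{J_m} |-> e_{Jbar} *)
Definition compV m (ar : 'I_m -> nat) (v : V k m) (ws : forall j : 'I_m, V k (ar j))
    : V k (arity ar) :=
  [ffun J' : nes (arity ar) => \sum_(J : nes m)
     \sum_(F : {dffun forall j : 'I_m, nes (ar j)})
       (if Jbar J F == val J' then v J * \prod_(j < m) ws j (F j) else 0)].

End Lin.

Definition admissible (k : comNzRingType) : Prop :=
  (exists f : {rmorphism int -> k}, bijective f) \/
  (exists f : {rmorphism rat -> k}, bijective f) \/
  (exists p : nat, prime p /\ exists f : {rmorphism 'F_p -> k}, bijective f) \/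
  ((forall x : k, x != 0 -> exists y : k, y * x = 1) /\
   (forall n : nat, n.+1%:R != 0 :> k)).

(* Main.v *)
Require Import Defs.
From HB Require Import structures.
From mathcomp Require Import all_boot all_order all_fingroup all_algebra.
Set Implicit Arguments. Unset Strict Implicit. Unset Printing Implicit Defensive.
Import Order.TTheory GRing.Theory Num.Theory.
Local Open Scope ring_scope.
Local Close Scope ring_scope.

Fixpoint vl (t : tm) : seq nat :=
  match t with Var i => [:: i] | Star a b => vl a | Bul a b => vl a ++ vl b end.
Fixpoint hl (t : tm) : seq nat :=
  match t with Var _ => [::] | Star a b => hl a ++ leaves b | Bul a b => hl a ++ hl b end.

Lemma leaves_vh t : perm_eq (leaves t) (vl t ++ hl t).
Proof.
elim: t => [i|a iha b ihb|a iha b ihb] /=; first exact: perm_refl.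
  by rewrite catA perm_cat2r.
apply: perm_trans (perm_cat iha ihb) _.
by rewrite perm_catACA.
Qed.

Lemma vl_nil t : vl t != [::].
Proof. by elim: t => //= a iha b ihb; case: (vl a) iha. Qed.

Inductive eqv : tm -> tm -> Prop :=
| eqv_refl a : eqv a a
| eqv_step a b : rstep a b -> eqv a b
| eqv_sym a b : eqv a b -> eqv b a
| eqv_trans a b c : eqv a b -> eqv b c -> eqv a c.

Lemma eqv_Sl a a' b : eqv a a' -> eqv (Star a b) (Star a' b).
Proof.
elim=> [x|x y h|x y _ ih|x y z _ ih1 _ ih2].
- exact: eqv_refl.
- by apply: eqv_step; apply: rs_Sl.
- exact: eqv_sym.
- exact: eqv_trans ih1 ih2.
Qed.
Lemma eqv_Sr a b b' : eqv b b' -> eqv (Star a b) (Star a b').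
Proof.
elim=> [x|x y h|x y _ ih|x y z _ ih1 _ ih2].
- exact: eqv_refl.
- by apply: eqv_step; apply: rs_Sr.
- exact: eqv_sym.
- exact: eqv_trans ih1 ih2.
Qed.
Lemma eqv_Bl a a' b : eqv a a' -> eqv (Bul a b) (Bul a' b).
Proof.
elim=> [x|x y h|x y _ ih|x y z _ ih1 _ ih2].
- exact: eqv_refl.
- by apply: eqv_step; apply: rs_Bl.
- exact: eqv_sym.
- exact: eqv_trans ih1 ih2.
Qed.
Lemma eqv_Br a b b' : eqv b b' -> eqv (Bul a b) (Bul a b').
Proof.
elim=> [x|x y h|x y _ ih|x y z _ ih1 _ ih2].
- exact: eqv_refl.
- by apply: eqv_step; apply: rs_Br.
- exact: eqv_sym.
- exact: eqv_trans ih1 ih2.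
Qed.

Section Fold.
Variable op : tm -> tm -> tm.
Hypothesis opl : forall a a' b, eqv a a' -> eqv (op a b) (op a' b).
Hypothesis opsw : forall x a b, eqv (op (op x (Var a)) (Var b)) (op (op x (Var b)) (Var a)).
Definition fo x (l : seq nat) := foldl (fun y v => op y (Var v)) x l.

Lemma fo_cong x x' l : eqv x x' -> eqv (fo x l) (fo x' l).
Proof. by elim: l x x' => //= a l ih x x' h; apply: ih; apply: opl. Qed.

Lemma fo_M x a l : eqv (fo (op x (Var a)) l) (fo x (rcons l a)).
Proof.
elim: l x => [|b l ih] x /=; first exact: eqv_refl.
apply: eqv_trans (ih (op x (Var b))).
by apply: fo_cong; apply: opsw.
Qed.

Lemma fo_perm x l l' : perm_eq l l' -> eqv (fo x l) (fo x l').
Proof.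
elim: l x l' => [|a l ih] x l' hp.
  by move: (perm_size hp); case: l' hp => // _ _; apply: eqv_refl.
have : a \in l' by rewrite -(perm_mem hp) mem_head.
move=> hin; have [l2 [l3 hl]] : exists l2 l3, l' = l2 ++ a :: l3.
  by case/splitPr: hin => l2 l3; exists l2, l3.
subst l'.
have hp' : perm_eq l (l2 ++ l3).
  by rewrite -(perm_cons a); apply: perm_trans hp _; rewrite -cat1s perm_catCA.
rewrite /=; apply: eqv_trans (ih _ _ hp') _.
rewrite /fo -cat_rcons !foldl_cat.
change (eqv (fo (fo (op x (Var a)) l2) l3) (fo (fo x (rcons l2 a)) l3)); apply: fo_cong; exact: fo_M.
Qed.
End Fold.

Definition xstar := fo Star.
Definition bl := fo Bul.
Definition B (l : seq nat) := if l is a :: l' then bl (Var a) l' else Var 0.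

Lemma star_sw x a b : eqv (Star (Star x (Var a)) (Var b)) (Star (Star x (Var b)) (Var a)).
Proof.
apply: eqv_trans (eqv_step (rs_assoc _ _ _)) _.
apply: eqv_trans (eqv_step (rs_perm _ _ _)) _.
exact: eqv_sym (eqv_step (rs_assoc _ _ _)).
Qed.
Lemma bul_sw x a b : eqv (Bul (Bul x (Var a)) (Var b)) (Bul (Bul x (Var b)) (Var a)).
Proof.
apply: eqv_trans (eqv_step (rs_bassoc _ _ _)) _.
apply: eqv_trans (eqv_step (rs_Br _ (rs_comm _ _))) _.
exact: eqv_sym (eqv_step (rs_bassoc _ _ _)).
Qed.

Lemma xstar_cong x x' l : eqv x x' -> eqv (xstar x l) (xstar x' l).
Proof. exact: (@fo_cong Star eqv_Sl). Qed.
Lemma xstar_perm x l l' : perm_eq l l' -> eqv (xstar x l) (xstar x l').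
Proof. exact: (@fo_perm Star eqv_Sl star_sw). Qed.
Lemma bl_cong x x' l : eqv x x' -> eqv (bl x l) (bl x' l).
Proof. exact: (@fo_cong Bul eqv_Bl). Qed.
Lemma bl_perm x l l' : perm_eq l l' -> eqv (bl x l) (bl x l').
Proof. exact: (@fo_perm Bul eqv_Bl bul_sw). Qed.

Lemma B_perm l l' : perm_eq l l' -> eqv (B l) (B l').
Proof.
case: l => [|a l1] hp.
  by move: (perm_size hp); case: l' hp => // _ _; apply: eqv_refl.
case: l' hp => [|b l1'] hp; first by move: (perm_size hp).
rewrite /=.
case: (eqVneq a b) hp => [<-|nab] hp.
  by apply: bl_perm; rewrite -(perm_cons a).
have : a \in l1'.
  by move: (perm_mem hp a); rewrite mem_head inE (negbTE nab) /= => <-.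
move=> hin; have [l2 [l3 hl]] : exists l2 l3, l1' = l2 ++ a :: l3.
  by case/splitPr: hin => l2 l3; exists l2, l3.
subst l1'.
apply: eqv_sym.
apply: eqv_trans (bl_perm (Var b) (_ : perm_eq _ (a :: l2 ++ l3))) _.
  by rewrite -cat1s perm_catCA.
change (eqv (bl (Bul (Var b) (Var a)) (l2 ++ l3)) (bl (Var a) l1)).
apply: eqv_trans (bl_cong _ (eqv_step (rs_comm _ _))) _.
apply: eqv_sym.
have e1 : perm_eq (l2 ++ a :: l3) (a :: l2 ++ l3) by rewrite -cat1s perm_catCA.
have e2 : perm_eq (b :: a :: l2 ++ l3) (a :: b :: l2 ++ l3).
  by rewrite -(cat1s b) -(cat1s a) perm_catCA.
have h1 : perm_eq (a :: l1) (a :: b :: l2 ++ l3).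
  by apply: perm_trans hp _; apply: perm_trans e2; rewrite perm_cons.
rewrite perm_cons in h1.
exact: (bl_perm (Var a) h1).
Qed.

Lemma xstar_rcons x l z : xstar x (rcons l z) = Star (xstar x l) (Var z).
Proof. by rewrite /xstar /fo foldl_rcons. Qed.
Lemma bl_rcons x l z : bl x (rcons l z) = Bul (bl x l) (Var z).
Proof. by rewrite /bl /fo foldl_rcons. Qed.
Lemma xstar_cat x l1 l2 : xstar x (l1 ++ l2) = xstar (xstar x l1) l2.
Proof. by rewrite /xstar /fo foldl_cat. Qed.
Lemma bl_cat x l1 l2 : bl x (l1 ++ l2) = bl (bl x l1) l2.
Proof. by rewrite /bl /fo foldl_cat. Qed.

Lemma star_leaves y b : eqv (Star y b) (xstar y (leaves b)).
Proof.
elim: b y => [i|c ihc d ihd|c ihc d ihd] y /=; first exact: eqv_refl.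
- apply: eqv_trans (eqv_sym (eqv_step (rs_assoc _ _ _))) _.
  apply: eqv_trans (ihd _) _.
  by rewrite xstar_cat; apply: xstar_cong.
- apply: eqv_trans (eqv_step (rs_mix1 _ _ _)) _.
  apply: eqv_trans (eqv_sym (eqv_step (rs_assoc _ _ _))) _.
  apply: eqv_trans (ihd _) _.
  by rewrite xstar_cat; apply: xstar_cong.
Qed.

Lemma bul_xstar X Y l : eqv (Bul X (xstar Y l)) (xstar (Bul X Y) l).
Proof.
elim/last_ind: l => [|l z ih]; first exact: eqv_refl.
rewrite !xstar_rcons.
apply: eqv_trans (eqv_sym (eqv_step (rs_mix2 _ _ _))) _.
exact: eqv_Sl.
Qed.

Lemma xstar_bul X Y l : eqv (Bul (xstar X l) Y) (xstar (Bul X Y) l).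
Proof.
apply: eqv_trans (eqv_step (rs_comm _ _)) _.
apply: eqv_trans (bul_xstar _ _ _) _.
exact: xstar_cong (eqv_step (rs_comm _ _)).
Qed.

Lemma bul_bl X Y l : eqv (Bul X (bl Y l)) (bl (Bul X Y) l).
Proof.
elim/last_ind: l => [|l z ih]; first exact: eqv_refl.
rewrite !bl_rcons.
apply: eqv_trans (eqv_sym (eqv_step (rs_bassoc _ _ _))) _.
exact: eqv_Bl.
Qed.

Lemma Bcat l1 l2 : l1 != [::] -> l2 != [::] -> eqv (Bul (B l1) (B l2)) (B (l1 ++ l2)).
Proof.
case: l1 => // a l1 _; case: l2 => // b l2 _ /=.
apply: eqv_trans (bul_bl _ _ _) _.
rewrite bl_cat; exact: eqv_refl.
Qed.

Lemma nf_eqv t : eqv t (xstar (B (vl t)) (hl t)).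
Proof.
elim: t => [i|a iha b ihb|a iha b ihb] /=; first exact: eqv_refl.
- apply: eqv_trans (eqv_Sl _ iha) _.
  apply: eqv_trans (star_leaves _ _) _.
  by rewrite xstar_cat; apply: eqv_refl.
- apply: eqv_trans (eqv_Bl _ iha) _.
  apply: eqv_trans (eqv_Br _ ihb) _.
  apply: eqv_trans (xstar_bul _ _ _) _.
  apply: eqv_trans (xstar_cong _ (bul_xstar _ _ _)) _.
  rewrite -xstar_cat.
  apply: eqv_trans (xstar_perm _ (_ : perm_eq _ (hl a ++ hl b))) _.
    by rewrite perm_catC.
  apply: xstar_cong; apply: Bcat; exact: vl_nil.
Qed.

Lemma rstep_leaves a b : rstep a b -> perm_eq (leaves a) (leaves b).
Proof.
elim=> /= [x y z|x y z|x y|x y z|x y z|x y z|a0 a' b0 _ ih|a0 b0 b' _ ih|a0 a' b0 _ ih|a0 b0 b' _ ih].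
- by rewrite catA.
- by rewrite perm_cat2l perm_catC.
- by rewrite perm_catC.
- by rewrite catA.
- by [].
- by rewrite catA.
- by rewrite perm_cat2r.
- by rewrite perm_cat2l.
- by rewrite perm_cat2r.
- by rewrite perm_cat2l.
Qed.

Lemma eqv_leaves a b : eqv a b -> perm_eq (leaves a) (leaves b).
Proof.
elim=> [x|x y h|x y _ ih|x y z _ ih1 _ ih2].
- exact: perm_refl.
- exact: rstep_leaves.
- by rewrite perm_sym.
- exact: perm_trans ih1 ih2.
Qed.

Lemma eqv_ml n a b : eqv a b -> multilinear n a = multilinear n b.
Proof. by move=> h; rewrite /multilinear (permPl (eqv_leaves h)). Qed.

Lemma rstep_vl a b : rstep a b -> vl a =i vl b.
Proof.
elim=> /= [x y z|x y z|x y|x y z|x y z|x y z|a0 a' b0 _ ih|a0 b0 b' _ ih|a0 a' b0 _ ih|a0 b0 b' _ ih] i //.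
- by rewrite !mem_cat orbC.
- by rewrite catA.
- by rewrite !mem_cat ih.
- by rewrite !mem_cat ih.
Qed.

Definition visset n (t : tm) : {set 'I_n} := [set i : 'I_n | val i \in vl t].

Lemma rstep_visset n a b : rstep a b -> visset n a = visset n b.
Proof. by move=> h; apply/setP => i; rewrite !inE (rstep_vl h). Qed.

Lemma vl_leaves t i : i \in vl t -> i \in leaves t.
Proof. by move=> h; rewrite (perm_mem (leaves_vh t)) mem_cat h. Qed.
Lemma hl_leaves t i : i \in hl t -> i \in leaves t.
Proof. by move=> h; rewrite (perm_mem (leaves_vh t)) mem_cat h orbT. Qed.

Lemma ml_lt n t i : multilinear n t -> i \in leaves t -> (i < n)%N.
Proof. by move=> h; rewrite (perm_mem h) mem_iota. Qed.

Lemma ml_uniq n t : multilinear n t -> uniq (vl t ++ hl t).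
Proof.
move=> h; rewrite -(perm_uniq (leaves_vh t)) (perm_uniq h); exact: iota_uniq.
Qed.

Lemma visset_ne n t : multilinear n t -> visset n t != set0.
Proof.
move=> h; have := vl_nil t; case e: (vl t) => [|a l] // _.
have ha : a \in vl t by rewrite e mem_head.
have lt := ml_lt h (vl_leaves ha).
apply/set0Pn; exists (Ordinal lt); by rewrite inE.
Qed.

Definition Vc n (J : {set 'I_n}) : seq nat := [seq val x | x <- enum J].
Definition Hc n (J : {set 'I_n}) : seq nat := [seq val x | x <- enum (~: J)].
Definition NF n (J : {set 'I_n}) := xstar (B (Vc J)) (Hc J).

Lemma Vc_uniq n (J : {set 'I_n}) : uniq (Vc J).
Proof. by rewrite map_inj_uniq ?enum_uniq //; exact: val_inj. Qed.
Lemma Hc_uniq n (J : {set 'I_n}) : uniq (Hc J).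
Proof. by rewrite map_inj_uniq ?enum_uniq //; exact: val_inj. Qed.

Lemma mem_Vc n (J : {set 'I_n}) (x : 'I_n) : (val x \in Vc J) = (x \in J).
Proof. by rewrite /Vc (mem_map val_inj) mem_enum. Qed.
Lemma mem_Hc n (J : {set 'I_n}) (x : 'I_n) : (val x \in Hc J) = (x \notin J).
Proof. by rewrite /Hc (mem_map val_inj) mem_enum inE. Qed.
Lemma Vc_lt n (J : {set 'I_n}) i : i \in Vc J -> (i < n)%N.
Proof. rewrite /Vc /Hc; case/mapP => x _ e; rewrite e; exact: ltn_ord. Qed.
Lemma Hc_lt n (J : {set 'I_n}) i : i \in Hc J -> (i < n)%N.
Proof. rewrite /Vc /Hc; case/mapP => x _ e; rewrite e; exact: ltn_ord. Qed.

Lemma perm_v n t : multilinear n t -> perm_eq (vl t) (Vc (visset n t)).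
Proof.
move=> h; have u := ml_uniq h; rewrite cat_uniq in u; case/and3P: u => u1 _ _.
apply: uniq_perm => //; first exact: Vc_uniq.
move=> i; apply/idP/idP => hi.
  have lt := ml_lt h (vl_leaves hi).
  by rewrite -[i]/(val (Ordinal lt)) mem_Vc inE.
have lt := Vc_lt hi.
by move: hi; rewrite -[i]/(val (Ordinal lt)) mem_Vc inE.
Qed.

Lemma perm_h n t : multilinear n t -> perm_eq (hl t) (Hc (visset n t)).
Proof.
move=> h; have u := ml_uniq h; rewrite cat_uniq in u; case/and3P: u => _ dis u2.
apply: uniq_perm => //; first exact: Hc_uniq.
move=> i; apply/idP/idP => hi.
  have lt := ml_lt h (hl_leaves hi).
  rewrite -[i]/(val (Ordinal lt)) mem_Hc inE /=.
  apply/negP => hv; move/hasP: dis; apply; by exists i.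
have lt := Hc_lt hi.
move: hi; rewrite -[i]/(val (Ordinal lt)) mem_Hc inE /= => hv.
have : i \in leaves t by rewrite (perm_mem h) mem_iota.
by rewrite (perm_mem (leaves_vh t)) mem_cat (negbTE hv).
Qed.

Lemma eqv_NF n t : multilinear n t -> eqv t (NF (visset n t)).
Proof.
move=> h; apply: eqv_trans (nf_eqv t) _.
apply: eqv_trans (xstar_cong _ (B_perm (perm_v h))) _.
exact: xstar_perm (perm_h h).
Qed.

Lemma vl_fo op x l : (forall a b, vl (op a b) = vl a) -> vl (fo op x l) = vl x.
Proof. by move=> h; elim: l x => //= a l ih x; rewrite ih h. Qed.
Lemma leaves_fo op x l : (forall a b, leaves (op a b) = leaves a ++ leaves b) ->
  leaves (fo op x l) = leaves x ++ l.
Proof. by move=> h; elim: l x => [|a l ih] x /=; rewrite ?cats0 // ih h -catA. Qed.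
Lemma vl_bl x l : vl (bl x l) = vl x ++ l.
Proof. by elim: l x => [|a l ih] x /=; rewrite ?cats0 // /bl /= -/(bl _ _) ih /= -catA. Qed.

Lemma vl_NF n (J : {set 'I_n}) : J != set0 -> vl (NF J) = Vc J.
Proof.
move=> hJ; rewrite /NF /xstar vl_fo //.
case e: (Vc J) => [|a l] /=; last by rewrite vl_bl.
case/set0Pn: hJ => x hx; by rewrite -mem_Vc e in hx.
Qed.

Lemma leaves_NF n (J : {set 'I_n}) : J != set0 -> leaves (NF J) = Vc J ++ Hc J.
Proof.
move=> hJ; rewrite /NF /xstar leaves_fo //.
case e: (Vc J) => [|a l] /=; last by rewrite /bl leaves_fo.
case/set0Pn: hJ => x hx; by rewrite -mem_Vc e in hx.
Qed.

Lemma NF_ml n (J : {set 'I_n}) : J != set0 -> multilinear n (NF J).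
Proof.
move=> hJ; rewrite /multilinear leaves_NF //.
apply: uniq_perm; last 2 first.
- exact: iota_uniq.
- move=> i; rewrite mem_cat mem_iota /=; apply/idP/idP.
    by case/orP => [/Vc_lt|/Hc_lt].
  move=> lt; rewrite -[i]/(val (Ordinal lt)) mem_Vc mem_Hc; exact: orbN.
rewrite cat_uniq Vc_uniq Hc_uniq /= andbT.
apply/hasPn => i hi; have lt := Hc_lt hi.
move: hi; rewrite -[i]/(val (Ordinal lt)) (mem_Hc J (Ordinal lt)) (mem_Vc J (Ordinal lt)) /=. by move=> ->.
Qed.

Lemma NF_vis n (J : {set 'I_n}) : J != set0 -> visset n (NF J) = J.
Proof. by move=> hJ; apply/setP => x; rewrite inE vl_NF // mem_Vc. Qed.

Lemma vl_subst s t : vl (subst s t) = flatten (map (fun i => vl (s i)) (vl t)).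
Proof.
elim: t => [i|a iha b ihb|a iha b ihb] /=; first by rewrite cats0.
  by [].
by rewrite iha ihb map_cat flatten_cat.
Qed.

Lemma vl_subst_var g t : vl (subst (fun i => Var (g i)) t) = map g (vl t).
Proof.
elim: t => [i|a iha b ihb|a iha b ihb] //=.
by rewrite iha ihb map_cat.
Qed.

Lemma vl_shift o u : vl (shift o u) = map (addn o) (vl u).
Proof. exact: vl_subst_var. Qed.

Lemma visset_relabel n (s : 'S_n) t : multilinear n t ->
  visset n (relabel s t) = s @: visset n t.
Proof.
move=> ht; apply/setP => x; rewrite inE /relabel vl_subst_var.
apply/idP/idP.
  case/mapP => i hi e.
  have lt := ml_lt ht (vl_leaves hi).
  move: e; rewrite -[i]/(val (Ordinal lt)) valK /= => e.
  have -> : x = s (Ordinal lt) by apply: val_inj.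
  by apply: imset_f; rewrite inE.
case/imsetP => y hy ->; rewrite inE in hy.
by apply/mapP; exists (val y) => //; rewrite valK.
Qed.

Lemma visset_compose m (ar : 'I_m -> nat) t ts
  (ht : multilinear m t) (hts : forall j, multilinear (ar j) (ts j))
  (J0 : nes m) (F0 : {dffun forall j : 'I_m, nes (ar j)}) :
  val J0 = visset m t -> (forall j, val (F0 j) = visset (ar j) (ts j)) ->
  Jbar J0 F0 = visset (arity ar) (compose ar t ts).
Proof.
move=> hJ0 hF0; apply/setP => x; rewrite !inE /compose vl_subst.
apply/existsP/idP.
  case=> j /andP [hj /existsP [a /andP [ha /eqP e]]].
  rewrite hJ0 inE in hj; rewrite hF0 inE in ha.
  apply/flattenP; exists (vl (match insub (val j) : option 'I_m with
                  | Some o => shift (off ar o) (ts o)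
                  | None => Var (val j) end)).
    by apply/mapP; exists (val j).
  by rewrite valK vl_shift e; apply: map_f.
case/flattenP => s /mapP [i hi ->] hx.
have lt := ml_lt ht (vl_leaves hi).
move: hx hi; rewrite -[i]/(val (Ordinal lt)) valK vl_shift => /mapP [a ha e] hi.
have lta := ml_lt (hts _) (vl_leaves ha).
exists (Ordinal lt); rewrite hJ0 inE hi /=.
apply/existsP; exists (Ordinal lta); rewrite hF0 inE ha /= e.
by [].
Qed.

Local Open Scope ring_scope.

Section K.
Variable k : comNzRingType.

Definition phiK n (t : tm) : V k n := [ffun J : nes n => ((val J == visset n t) : bool)%:R].

Lemma phiKE n t J : phiK n t J = ((val J == visset n t) : bool)%:R.
Proof. by rewrite ffunE. Qed.

Lemma sum_eq1 (I : finType) (i0 : I) (g : I -> k) :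
  \sum_(i : I) (i == i0)%:R * g i = g i0.
Proof.
rewrite (bigD1 i0) //= eqxx mul1r big1 ?addr0 // => i /negbTE ->; by rewrite mul0r.
Qed.

Lemma sum_nes n (X : {set 'I_n}) (hX : X != set0) (g : nes n -> k) :
  \sum_(J : nes n) (val J == X)%:R * g J = g (exist _ X hX).
Proof.
rewrite -(sum_eq1 (exist _ X hX)); apply: eq_bigr => J _.
by rewrite -val_eqE.
Qed.

Lemma sumS1 (S : seq tm) (x : tm) (g : tm -> k) : uniq S -> x \in S ->
  \sum_(t <- S) (x == t)%:R * g t = g x.
Proof.
elim: S => //= a S ih /andP [na u] hx; rewrite big_cons.
case: (eqVneq x a) hx na => [<-|ne] hx na.
  rewrite mul1r big_seq big1 ?addr0 // => t ht.
  case: (eqVneq x t) => [e|]; last by rewrite mul0r.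
  by rewrite e ht in na.
rewrite mul0r add0r ih //.
by move: hx; rewrite inE (negbTE ne).
Qed.

Lemma coefLE (c : lc k) t : coef c t = \sum_(p <- c) p.1 * (p.2 == t)%:R.
Proof.
rewrite /coef big_mkcond; apply: eq_bigr => p _.
by case: (p.2 == t); rewrite ?mulr1 ?mulr0.
Qed.

Lemma lin_rel (c : lc k) (f : tm -> k) (ds : seq (k * (tm * tm))) :
  (forall t, coef c t = \sum_(d <- ds) d.1 * ((d.2.1 == t)%:R - (d.2.2 == t)%:R)) ->
  \sum_(p <- c) p.1 * f p.2 = \sum_(d <- ds) d.1 * (f d.2.1 - f d.2.2).
Proof.
move=> hc.
pose S := undup (map snd c ++ map (fun d => d.2.1) ds ++ map (fun d => d.2.2) ds).
have uS : uniq S by exact: undup_uniq.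
have e1 : \sum_(p <- c) p.1 * f p.2 = \sum_(t <- S) coef c t * f t.
  under [RHS]eq_bigr do rewrite coefLE mulr_suml.
  rewrite exchange_big /=; apply: eq_big_seq => p hp.
  rewrite -(sumS1 f uS (_ : p.2 \in S)); last first.
    by rewrite mem_undup mem_cat (map_f snd hp).
  by rewrite mulr_sumr; apply: eq_bigr => t _; rewrite mulrA.
rewrite e1.
under eq_bigr do rewrite hc mulr_suml.
rewrite exchange_big /=; apply: eq_big_seq => d hd.
rewrite -(sumS1 f uS (_ : d.2.1 \in S)); last first.
  by rewrite mem_undup !mem_cat (map_f _ hd) ?orbT.
rewrite -(sumS1 f uS (_ : d.2.2 \in S)); last first.
  by rewrite mem_undup !mem_cat (map_f _ hd) ?orbT.
rewrite -sumrB mulr_sumr; apply: eq_bigr => t _.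
by rewrite mulrBr mulrBl mulrBr !mulrA.
Qed.

Definition Rep n (f : tm -> k) := exists ds : seq (k * (tm * tm)),
    (forall d, d \in ds -> rstep d.2.1 d.2.2 /\ multilinear n d.2.1) /\
    forall t, f t = \sum_(d <- ds) d.1 * ((d.2.1 == t)%:R - (d.2.2 == t)%:R).

Lemma Rep_ext n f g : (forall t, f t = g t) -> Rep n f -> Rep n g.
Proof. by move=> e [ds [h1 h2]]; exists ds; split=> // t; rewrite -e. Qed.

Lemma Rep0 n : Rep n (fun _ => 0).
Proof. by exists [::]; split=> // t; rewrite big_nil. Qed.

Lemma Rep_add n f g : Rep n f -> Rep n g -> Rep n (fun t => f t + g t).
Proof.
move=> [d1 [h1 e1]] [d2 [h2 e2]]; exists (d1 ++ d2); split.
  by move=> d; rewrite mem_cat => /orP [/h1|/h2].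
by move=> t; rewrite big_cat e1 e2.
Qed.

Lemma Rep_scale n a f : Rep n f -> Rep n (fun t => a * f t).
Proof.
move=> [ds [h1 e1]]; exists (map (fun d => (a * d.1, d.2)) ds); split.
  by move=> d /mapP [d' hd' ->]; exact: (h1 _ hd').
by move=> t; rewrite big_map e1 mulr_sumr; apply: eq_bigr => d _; rewrite mulrA.
Qed.

Lemma Rep_step n a b : rstep a b -> multilinear n a ->
  Rep n (fun t => (a == t)%:R - (b == t)%:R).
Proof.
move=> h hm; exists [:: (1, (a, b))]; split.
  by move=> d; rewrite inE => /eqP -> /=.
by move=> t; rewrite big_seq1 mul1r.
Qed.

Lemma Rep_eqv n a b : eqv a b -> multilinear n a ->
  Rep n (fun t => (a == t)%:R - (b == t)%:R).
Proof.
elim=> [x|x y h|x y hxy ih|x y z hxy ih1 hyz ih2] hm.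
- by apply: (Rep_ext _ (Rep0 n)) => t; rewrite subrr.
- exact: Rep_step.
- rewrite -(eqv_ml n hxy) in hm.
  apply: (Rep_ext _ (Rep_scale (-1) (ih hm))) => t.
  by rewrite mulN1r opprB.
- have hm' : multilinear n y by rewrite -(eqv_ml n hxy).
  apply: (Rep_ext _ (Rep_add (ih1 hm) (ih2 hm'))) => t.
  by rewrite addrA subrK.
Qed.

Lemma Rep_sum (n : nat) (T : eqType) (s : seq T) (F : T -> tm -> k) :
  (forall x, x \in s -> Rep n (F x)) -> Rep n (fun t => \sum_(x <- s) F x t).
Proof.
elim: s => [|a s ih] h.
  by apply: (Rep_ext _ (Rep0 n)) => t; rewrite big_nil.
apply: (Rep_ext _ (Rep_add (h a (mem_head _ _)) (ih _))) => [t|x hx].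
  by rewrite big_cons.
by apply: h; rewrite inE hx orbT.
Qed.
End K.

Theorem mainTheorem6 (k : comNzRingType) (hk : admissible k) :
  exists phi : forall n : nat, tm -> V k n,
    (forall n : nat, (0 < n)%N ->
       (forall c : lc k, lc_multilinear n c -> in_rel n c -> linext (phi n) c = 0) /\
       (forall c : lc k, lc_multilinear n c -> linext (phi n) c = 0 -> in_rel n c) /\
       (forall v : V k n, exists c : lc k, lc_multilinear n c /\ linext (phi n) c = v) /\
       (forall (s : 'S_n) (t : tm), multilinear n t ->
          phi n (relabel s t) = actV s (phi n t))) /\
    (forall (m : nat) (ar : 'I_m -> nat) (t : tm) (ts : 'I_m -> tm),
       (0 < m)%N -> (forall j, 0 < ar j)%N ->
       multilinear m t -> (forall j, multilinear (ar j) (ts j)) ->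
       phi (arity ar) (compose ar t ts) =
         compV (phi m t) (fun j : 'I_m => phi (ar j) (ts j))).
Proof.
exists (fun n t => phiK k n t); split.
  move=> n hn; split; [|split; [|split]].
  - move=> c hc [ds [hds hcoef]]; apply/ffunP => J; rewrite /linext !ffunE.
    rewrite (lin_rel (fun t => phiK k n t J) hcoef).
    rewrite big_seq big1 // => d hd.
    by rewrite !ffunE (rstep_visset n (hds d hd).1) subrr mulr0.
  - move=> c hc h0.
    have hz : forall J : nes n, \sum_(p <- c) p.1 * (val J == visset n p.2)%:R = 0.
      by move=> J; move/ffunP: h0 => /(_ J); rewrite !ffunE; under eq_bigr do rewrite phiKE.
    have hcm : forall p, p \in c -> multilinear n p.2 by move=> p hp; exact: (allP hc p hp).
    have hR : @Rep k n (fun t => \sum_(p <- c) p.1 * ((p.2 == t)%:R - (NF (visset n p.2) == t)%:R)).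
      apply: Rep_sum => p hp; apply: Rep_scale; apply: Rep_eqv; last exact: hcm.
      exact: eqv_NF (hcm p hp).
    apply: (Rep_ext _ hR) => t.
    rewrite /= coefLE.
    have -> : \sum_(p <- c) p.1 * (p.2 == t)%:R =
       \sum_(p <- c) p.1 * ((p.2 == t)%:R - (NF (visset n p.2) == t)%:R) +
       \sum_(p <- c) p.1 * (NF (visset n p.2) == t)%:R.
      by rewrite -big_split /=; apply: eq_bigr => p _; rewrite mulrBr subrK.
    suff -> : \sum_(p <- c) p.1 * (NF (visset n p.2) == t)%:R = 0 by rewrite addr0.
    transitivity (\sum_(p <- c) p.1 * \sum_(J : nes n)
        (val J == visset n p.2)%:R * (NF (val J) == t)%:R).
      apply: eq_big_seq => p hp; congr (_ * _).
      by rewrite (sum_nes (visset_ne (hcm p hp))).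
    under eq_bigr do rewrite mulr_sumr.
    rewrite exchange_big /= big1 // => J _.
    under eq_bigr do rewrite mulrA.
    by rewrite -mulr_suml hz mul0r.
  - move=> v.
    exists (map (fun J : nes n => (v J, NF (val J))) (index_enum (nes n))); split.
      apply/allP => p /mapP [J _ ->] /=; exact: NF_ml (valP J).
    apply/ffunP => J'; rewrite /linext ffunE big_map.
    have nv : forall J : nes n, visset n (NF (val J)) = val J.
      by move=> J; exact: (NF_vis (valP J)).
    under eq_bigr do rewrite phiKE /= nv val_eqE eq_sym mulrC.
    exact: sum_eq1.
  - move=> s t ht; apply/ffunP => J'; rewrite /actV !ffunE.
    rewrite (visset_relabel s ht).
    transitivity (\sum_(J : nes n) (val J == visset n t)%:R * (s @: val J == val J')%:R : k).
      by rewrite (sum_nes (visset_ne ht)) /= eq_sym.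
    apply: eq_bigr => J _; rewrite phiKE.
    by case: (s @: val J == val J'); rewrite ?mulr1 ?mulr0.
move=> m ar t ts hm har ht hts; apply/ffunP => J'; rewrite /compV !ffunE.
pose J0 : nes m := exist _ (visset m t) (visset_ne ht).
pose F0 : {dffun forall j : 'I_m, nes (ar j)} :=
  finfun (fun j : 'I_m => exist (fun J => J != set0) (visset (ar j) (ts j)) (visset_ne (hts j))).
have hF0 : forall j, val (F0 j) = visset (ar j) (ts j) by move=> j; rewrite ffunE.
have hprod : forall F : {dffun forall j : 'I_m, nes (ar j)},
    \prod_(j < m) phiK k (ar j) (ts j) (F j) = (F == F0)%:R.
  move=> F; under eq_bigr do rewrite phiKE -hF0 val_eqE.
  case: (eqVneq F F0) => [->|ne].
    by rewrite big1 // => j _; rewrite eqxx.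
  case: (pickP (fun j => F j != F0 j)) => [j hj|hall].
    by rewrite (bigD1 j) //= (negbTE hj) mul0r.
  case/eqP: ne; apply/ffunP => j; apply/eqP.
  by move: (hall j) => /= /negbFE.
transitivity (\sum_(J : nes m) (val J == visset m t)%:R *
   \sum_(F : {dffun forall j : 'I_m, nes (ar j)}) (F == F0)%:R * (Jbar J F == val J')%:R : k).
  rewrite (sum_nes (visset_ne ht)) sum_eq1.
  rewrite (visset_compose ht hts (J0 := J0) (F0 := F0)) //.
  by rewrite eq_sym.
apply: eq_bigr => J _; rewrite mulr_sumr; apply: eq_bigr => F _.
rewrite hprod phiKE.
by case: (Jbar J F == val J'); rewrite ?mulr1 ?mulr0 // mulrA.
Qed.
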